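(* Let $G$ be a groupoid with class of objects $X$, let $A$ be a $G$-graded $k$-linear category (viewed as a right $kG$-comodule category), and let $B$ be the diagonal algebra $B_x=A_{e_x}$ (so $B=A^{{\rm co}kG}$). The following are equivalent: (1) $A$ is strongly graded, i.e. $A_\sigma A_\tau=A_{\sigma\tau}$ for all $x,y,z\in X$, $\sigma\in G_{xy}$, $\tau\in G_{yz}$; (2) $A_{\sigma^{-1}}A_\sigma=B_y$ for all $x,y\in X$ and $\sigma\in G_{xy}$; (3) the functors $F$ from $\mathcal{D}_k(X)_B$ to $G$-graded right $A$-modules, $F(N)_{xy}=N_x\otimes_{B_x}A_{xy}$ graded by $F(N)_\sigma=N_x\otimes_{B_x}A_\sigma$, and $G'$ in the other direction, $G'(M)_x=M_{e_x}$, form a pair of inverse equivalences; more precisely the unit maps $N_x\to N_x\otimes_{B_x}A_{e_x}$, $n\mapsto n\otimes 1_x$, and counit maps $M_{e_x}\otimes_{B_x}A_{xy}\to M_{xy}$, $m\otimes a\mapsto ma$, are all bijective; (4) $A$ is a $kG$-Galois category extension of $B$, i.e. for all $x,y,z\in X$ the map ${\rm can}^z_{xy}:A_{zx}\otimes_{B_x}A_{xy}\to A_{zy}\otimes kG_{xy}$, $a\otimes_{B_x}a'\mapsto\sum_{\sigma\in G_{xy}}aa'_\sigma\otimes\sigma$ (where $a'=\sum_\sigma a'_\sigma$ with $a'_\sigma\in A_\sigma$), is bijective.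
   Context: Let $k$ be a commutative ring; unadorned $\otimes$ is over $k$. A $k$-linear category $A$ with class of objects $X$ consists of $k$-modules $A_{xy}$, associative compositions $A_{xy}\otimes A_{yz}\to A_{xz}$, $a\otimes b\mapsto ab$, and units $1_x\in A_{xx}$. For a groupoid $G$ with objects $X$, $G_{xy}$ denotes the set of morphisms $y\to x$, $e_x\in G_{xx}$ the identity; $kG$ is the $k$-linear Hopf category with $kG_{xy}$ the free $k$-module on $G_{xy}$, composition extended linearly, $\Delta(\sigma)=\sigma\otimes\sigma$, $\varepsilon(\sigma)=1$, $S(\sigma)=\sigma^{-1}$. A $G$-graded $k$-linear category is a $k$-linear category $A$ with decompositions $A_{xy}=\bigoplus_{\sigma\in G_{xy}}A_\sigma$ such that $1_x\in A_{e_x}$ and $A_\sigma A_\tau\subseteq A_{\sigma\tau}$; it is a right $kG$-comodule category via $\rho(a)=a\otimes\sigma$ for $a\in A_\sigma$, and its coinvariants are $B_x=A_{e_x}$, a $k$-algebra; $A_{xy}$ is a $B_x$-$B_y$-bimodule by multiplication. $\mathcal{D}_k(X)_B$ is the category of families $(N_x)$ with $N_x$ a right $B_x$-module. A $G$-graded right $A$-module is a family $M=(M_{xy})$ with decompositions $M_{xy}=\bigoplus_{\sigma\in G_{xy}}M_\sigma$ and an associative unital right action $M_{xy}\otimes A_{yz}\to M_{xz}$ with $M_\sigma A_\tau\subseteq M_{\sigma\tau}$; morphisms are degree-preserving $A$-linear maps. $M_{e_x}$ is a right $B_x$-module. *)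

(* Defs.v *)
From HB Require Import structures.
From mathcomp Require Import all_boot all_order all_algebra.
Set Implicit Arguments. Unset Strict Implicit. Unset Printing Implicit Defensive.
Import GRing.Theory.
Local Open Scope ring_scope.

(* ghom x y = G_xy = the set of morphisms y -> x; composition
   G_xy x G_yz -> G_xz, (s, t) |-> s t.  Hom-sets carry decidable equality
   (eqType), needed to speak about homogeneous components. *)
Record groupoid (X : Type) := Groupoid {
  ghom :> X -> X -> eqType;
  gcomp : forall x y z, ghom x y -> ghom y z -> ghom x z;
  gid : forall x, ghom x x;
  ginv : forall x y, ghom x y -> ghom y x;
  gcompA : forall x y z w (s : ghom x y) (t : ghom y z) (u : ghom z w),
      gcomp s (gcomp t u) = gcomp (gcomp s t) u;
  gcomp1s : forall x y (s : ghom x y), gcomp (gid x) s = s;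
  gcomps1 : forall x y (s : ghom x y), gcomp s (gid y) = s;
  gcompVs : forall x y (s : ghom x y), gcomp (ginv s) s = gid y;
  gcompsV : forall x y (s : ghom x y), gcomp s (ginv s) = gid x
}.

Record klcat (k : comPzRingType) (X : Type) := KLCat {
  chom :> X -> X -> lmodType k;
  cmul : forall x y z, chom x y -> chom y z -> chom x z;
  cone : forall x, chom x x;
  cmulA : forall x y z w (a : chom x y) (b : chom y z) (c : chom z w),
      cmul a (cmul b c) = cmul (cmul a b) c;
  cmul1l : forall x y (a : chom x y), cmul (cone x) a = a;
  cmul1r : forall x y (a : chom x y), cmul a (cone y) = a;
  cmulDl : forall x y z (r : k) (a a' : chom x y) (b : chom y z),
      cmul (r *: a + a') b = r *: cmul a b + cmul a' b;
  cmulDr : forall x y z (r : k) (a : chom x y) (b b' : chom y z),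
      cmul a (r *: b + b') = r *: cmul a b + cmul a b'
}.

(* A_xy = (+)_{s in G_xy} A_s, encoded by the projections gc s : A_xy -> A_xy
   onto the components (a |-> a_s) and a (finite, duplicate-free) list
   gsupp a containing every s with a_s <> 0. *)
Record graded (k : comPzRingType) (X : Type) (G : groupoid X) (A : klcat k X) :=
  Graded {
  gc : forall x y, G x y -> A x y -> A x y;
  gsupp : forall x y, A x y -> seq (G x y);
  gc_lin : forall x y (s : G x y) (r : k) (a a' : A x y),
      gc s (r *: a + a') = r *: gc s a + gc s a';
  gc_sum : forall x y (a : A x y), a = \sum_(s <- gsupp a) gc s a;
  gc_out : forall x y (a : A x y) (s : G x y), s \notin gsupp a -> gc s a = 0;
  gsupp_uniq : forall x y (a : A x y), uniq (gsupp a);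
  gc_gc : forall x y (s t : G x y) (a : A x y),
      gc s (gc t a) = if s == t then gc t a else 0;
  gc_one : forall x, gc (gid G x) (cone A x) = cone A x;
  gc_mul : forall x y z (s : G x y) (t : G y z) (a : A x y) (b : A y z),
      gc s a = a -> gc t b = b -> gc (gcomp s t) (cmul a b) = cmul a b
}.

Section GradedDefs.
Variables (k : comPzRingType) (X : Type) (G : groupoid X) (A : klcat k X)
          (gA : graded G A).

Definition inDeg x y (s : G x y) (a : A x y) : Prop := gc gA s a = a.
Definition inB x (b : A x x) : Prop := inDeg (gid G x) b.

Definition prod_span_eq x y z (S : A x y -> Prop) (T : A y z -> Prop)
  (C : A x z -> Prop) : Prop :=
  forall c, C c <-> exists l : seq (A x y * A y z),
      (forall p, p \in l -> S p.1 /\ T p.2) /\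
      c = \sum_(p <- l) cmul p.1 p.2.

Definition strongly_graded : Prop :=
  forall x y z (s : G x y) (t : G y z),
    prod_span_eq (inDeg s) (inDeg t) (inDeg (gcomp s t)).

Definition inv_prod_cond : Prop :=
  forall x y (s : G x y), prod_span_eq (inDeg (ginv s)) (inDeg s) (@inB y).
End GradedDefs.

Definition is_klin (k : comPzRingType) (P Q : lmodType k) (h : P -> Q) : Prop :=
  forall (r : k) (u v : P), h (r *: u + v) = r *: h u + h v.

Definition balanced (k : comPzRingType) (U V R Q : lmodType k)
  (PU : U -> Prop) (PV : V -> Prop) (PB : R -> Prop)
  (ru : U -> R -> U) (lv : R -> V -> V) (g : U -> V -> Q) : Prop :=
  (forall r u u' v, PU u -> PU u' -> PV v -> g (r *: u + u') v = r *: g u v + g u' v) /\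
  (forall r u v v', PU u -> PV v -> PV v' -> g u (r *: v + v') = r *: g u v + g u v') /\
  (forall u b v, PU u -> PB b -> PV v -> g (ru u b) v = g u (lv b v)).

(* The k-linear map  PU (x)_{PB} PV -> P  induced by the balanced map f is
   bijective, expressed by the universal property of the tensor product:
   (P, f) is a tensor product of PU and PV over PB. *)
Definition tensor_map_bij (k : comPzRingType) (U V R P : lmodType k)
  (PU : U -> Prop) (PV : V -> Prop) (PB : R -> Prop)
  (ru : U -> R -> U) (lv : R -> V -> V) (f : U -> V -> P) : Prop :=
  forall (Q : lmodType k) (g : U -> V -> Q),
    balanced PU PV PB ru lv g ->
    (exists h : P -> Q, is_klin h /\
        forall u v, PU u -> PV v -> h (f u v) = g u v) /\
    (forall h h' : P -> Q, is_klin h -> is_klin h' ->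
        (forall u v, PU u -> PV v -> h (f u v) = g u v) ->
        (forall u v, PU u -> PV v -> h' (f u v) = g u v) ->
        forall w, h w = h' w).

(* A right B_x-module (B_x = A_{e_x} a subalgebra of A_xx): the action is a
   map N -> A_xx -> N, only its restriction to B_x is constrained. *)
Record rBmod (k : comPzRingType) (X : Type) (G : groupoid X) (A : klcat k X)
  (gA : graded G A) (x : X) := RBMod {
  nmod :> lmodType k;
  nact : nmod -> A x x -> nmod;
  nact1 : forall n, nact n (cone A x) = n;
  nactA : forall n b b', inB gA b -> inB gA b' ->
      nact (nact n b) b' = nact n (cmul b b');
  nactDl : forall r n n' b, inB gA b -> nact (r *: n + n') b = r *: nact n b + nact n' b;
  nactDr : forall r n b b', inB gA b -> inB gA b' ->
      nact n (r *: b + b') = r *: nact n b + nact n b'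
}.

Record grmod (k : comPzRingType) (X : Type) (G : groupoid X) (A : klcat k X)
  (gA : graded G A) := GrMod {
  mhom :> X -> X -> lmodType k;
  mact : forall x y z, mhom x y -> A y z -> mhom x z;
  mact1 : forall x y (m : mhom x y), mact m (cone A y) = m;
  mactA : forall x y z w (m : mhom x y) (a : A y z) (b : A z w),
      mact (mact m a) b = mact m (cmul a b);
  mactDl : forall x y z r (m m' : mhom x y) (a : A y z),
      mact (r *: m + m') a = r *: mact m a + mact m' a;
  mactDr : forall x y z r (m : mhom x y) (a a' : A y z),
      mact m (r *: a + a') = r *: mact m a + mact m a';
  mc : forall x y, G x y -> mhom x y -> mhom x y;
  msupp : forall x y, mhom x y -> seq (G x y);
  mc_lin : forall x y (s : G x y) (r : k) (m m' : mhom x y),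
      mc s (r *: m + m') = r *: mc s m + mc s m';
  mc_sum : forall x y (m : mhom x y), m = \sum_(s <- msupp m) mc s m;
  mc_out : forall x y (m : mhom x y) (s : G x y), s \notin msupp m -> mc s m = 0;
  msupp_uniq : forall x y (m : mhom x y), uniq (msupp m);
  mc_mc : forall x y (s t : G x y) (m : mhom x y),
      mc s (mc t m) = if s == t then mc t m else 0;
  mc_act : forall x y z (s : G x y) (t : G y z) (m : mhom x y) (a : A y z),
      mc s m = m -> gc gA t a = a -> mc (gcomp s t) (mact m a) = mact m a
}.

Section Conditions.
Variables (k : comPzRingType) (X : Type) (G : groupoid X) (A : klcat k X)
          (gA : graded G A).

(* (3) unit N_x -> N_x (x)_{B_x} A_{e_x} bijective: equivalently (the unit
   being a section of it) the multiplication N_x (x)_{B_x} B_x -> N_x,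
   n (x) b |-> n b, is bijective; and counit
   M_{e_x} (x)_{B_x} A_xy -> M_xy, m (x) a |-> m a, bijective. *)
Definition unit_bij : Prop :=
  forall x (N : rBmod gA x),
    tensor_map_bij (fun _ : N => True) (@inB _ _ _ _ gA x) (@inB _ _ _ _ gA x)
      (@nact _ _ _ _ _ _ N) (@cmul _ _ A x x x) (@nact _ _ _ _ _ _ N).

Definition counit_bij : Prop :=
  forall (M : grmod gA) x y,
    tensor_map_bij (fun m : M x x => @mc _ _ _ _ _ M x x (gid G x) m = m)
      (fun _ : A x y => True) (@inB _ _ _ _ gA x)
      (@mact _ _ _ _ _ M x x x) (@cmul _ _ A x x y) (@mact _ _ _ _ _ M x x y).

(* (4) can^z_xy : A_zx (x)_{B_x} A_xy -> A_zy (x) kG_xy,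
   a (x) a' |-> sum_s a a'_s (x) s, bijective.  Since
   A_zy (x) kG_xy = (+)_{s in G_xy} A_zy, a linear map out of it is a family
   (h_s)_s of linear maps A_zy -> Q, and h(can(a (x) a')) = sum_s h_s(a a'_s);
   bijectivity is expressed by the universal property of the tensor product. *)
Definition galois : Prop :=
  forall x y z (Q : lmodType k) (g : A z x -> A x y -> Q),
    balanced (fun _ => True) (fun _ => True) (@inB _ _ _ _ gA x)
      (@cmul _ _ A z x x) (@cmul _ _ A x x y) g ->
    (exists h : G x y -> A z y -> Q, (forall s, is_klin (h s)) /\
        forall a a', g a a' = \sum_(s <- gsupp gA a') h s (cmul a (gc gA s a'))) /\
    (forall h h' : G x y -> A z y -> Q,
        (forall s, is_klin (h s)) -> (forall s, is_klin (h' s)) ->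
        (forall a a', g a a' = \sum_(s <- gsupp gA a') h s (cmul a (gc gA s a'))) ->
        (forall a a', g a a' = \sum_(s <- gsupp gA a') h' s (cmul a (gc gA s a'))) ->
        forall s w, h s w = h' s w).
End Conditions.

(* Main.v *)
Require Import Defs.
From HB Require Import structures.
From mathcomp Require Import all_boot all_order all_algebra.
From mathcomp Require Import boolp.
Set Implicit Arguments. Unset Strict Implicit. Unset Printing Implicit Defensive.
Import GRing.Theory.
Local Open Scope ring_scope.

Section Lin.
Variables (k : comPzRingType) (U V : lmodType k).
Definition plin (P : U -> Prop) (f : U -> V) :=
  forall r u v, P u -> P v -> f (r *: u + v) = r *: f u + f v.
Variables (P : U -> Prop) (f : U -> V) (hf : plin P f) (P0 : P 0).
Lemma plin0 : f 0 = 0.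
Proof.
have := hf 1 P0 P0; rewrite !scale1r addr0 => h.
by apply: (addrI (f 0)); rewrite -h addr0.
Qed.
Lemma plinD u v : P u -> P v -> f (u + v) = f u + f v.
Proof. by move=> hu hv; rewrite -[u]scale1r hf // !scale1r. Qed.
Lemma plinZ r u : P u -> f (r *: u) = r *: f u.
Proof. by move=> hu; rewrite -[r *: u]addr0 hf // plin0 addr0. Qed.
Lemma plin_sum (I : Type) (l : seq I) (F : I -> U) :
  (forall u v, P u -> P v -> P (u + v)) -> (forall i, P (F i)) ->
  f (\sum_(i <- l) F i) = \sum_(i <- l) f (F i).
Proof.
move=> PD PF; elim: l => [|i l IH]; first by rewrite !big_nil plin0.
have Ps : forall l', P (\sum_(j <- l') F j).
  by elim=> [|j l' IH']; rewrite ?big_nil ?big_cons //; apply: PD.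
by rewrite !big_cons plinD // IH.
Qed.
End Lin.

Lemma klin_plin (k : comPzRingType) (U V : lmodType k) (f : U -> V) :
  is_klin f -> plin (fun _ => True) f.
Proof. by move=> h r u v _ _; apply: h. Qed.

Lemma klin_sum (k : comPzRingType) (U V : lmodType k) (f : U -> V) (I : Type) (l : seq I) (F : I -> U) :
  is_klin f -> f (\sum_(i <- l) F i) = \sum_(i <- l) f (F i).
Proof. by move=> h; apply: (plin_sum (klin_plin h)). Qed.
Lemma klin0 (k : comPzRingType) (U V : lmodType k) (f : U -> V) : is_klin f -> f 0 = 0.
Proof. by move=> h; apply: (plin0 (klin_plin h)). Qed.
Lemma klinD (k : comPzRingType) (U V : lmodType k) (f : U -> V) u v : is_klin f -> f (u + v) = f u + f v.
Proof. by move=> h; apply: (plinD (klin_plin h)). Qed.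
Lemma klinZ (k : comPzRingType) (U V : lmodType k) (f : U -> V) r u : is_klin f -> f (r *: u) = r *: f u.
Proof. by move=> h; apply: (plinZ (klin_plin h)). Qed.

Lemma sum_pred1 (T : eqType) (V : nmodType) (l : seq T) (u : T) (F : T -> V) :
  uniq l -> \sum_(v <- l) (if v == u then F v else 0) = if u \in l then F u else 0.
Proof.
elim: l => [|a l IH] /=; first by rewrite big_nil.
case/andP=> anl ul; rewrite big_cons IH // in_cons.
case: (eqVneq a u) => [<-|ne] /=; first by rewrite (negbTE anl) addr0.
by rewrite add0r.
Qed.

Lemma sum_supp (T : eqType) (V : nmodType) (l1 l2 : seq T) (F : T -> V) :
  uniq l1 -> uniq l2 -> {subset l1 <= l2} -> (forall s, s \notin l1 -> F s = 0) ->
  \sum_(s <- l1) F s = \sum_(s <- l2) F s.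
Proof.
move=> u1 u2 sub h0.
rewrite [RHS](bigID (fun s => s \in l1)) /= [X in _ = _ + X]big1 ?addr0; last first.
  by move=> s /h0.
rewrite -[in RHS]big_filter; apply: perm_big; apply: uniq_perm => //.
  exact: filter_uniq.
by move=> s; rewrite mem_filter; case e: (s \in l1) => //=; rewrite sub.
Qed.

Section Groupoid.
Variables (X : Type) (G : groupoid X).
Lemma ginvK x y (s : G x y) : ginv (ginv s) = s.
Proof.
by rewrite -[LHS]gcomps1 -(gcompVs s) gcompA gcompVs gcomp1s.
Qed.
Lemma gcompVl x y z (s : G x y) (t : G y z) : gcomp (ginv s) (gcomp s t) = t.
Proof. by rewrite gcompA gcompVs gcomp1s. Qed.
Lemma gcompVr x y z (s : G y x) (t : G y z) : gcomp s (gcomp (ginv s) t) = t.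
Proof. by rewrite gcompA gcompsV gcomp1s. Qed.
Lemma gcancelr x y z (u v : G z x) (s : G x y) : (gcomp u s == gcomp v s) = (u == v).
Proof.
apply/eqP/eqP => [h|->] //.
by rewrite -[u]gcomps1 -[v]gcomps1 -(gcompsV s) !gcompA h.
Qed.
Lemma gcancell x y z (r : G z x) (u v : G x y) : (gcomp r u == gcomp r v) = (u == v).
Proof.
apply/eqP/eqP => [h|->] //.
by rewrite -[u](gcompVl r) -[v](gcompVl r) h.
Qed.
End Groupoid.
Section Graded.
Variables (k : comPzRingType) (X : Type) (G : groupoid X) (A : klcat k X) (gA : graded G A).

Lemma cmul_klinl x y z (b : A y z) : is_klin (fun a : A x y => cmul a b).
Proof. by move=> r u v; rewrite cmulDl. Qed.
Lemma cmul_klinr x y z (a : A x y) : is_klin (fun b : A y z => cmul a b).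
Proof. by move=> r u v; rewrite cmulDr. Qed.
Lemma gc_klin x y (s : G x y) : is_klin (gc gA s).
Proof. by move=> r u v; rewrite gc_lin. Qed.

Lemma cmul0l x y z (b : A y z) : cmul (0 : A x y) b = 0.
Proof. exact: (klin0 (@cmul_klinl x y z b)). Qed.
Lemma cmul0r x y z (a : A x y) : cmul a (0 : A y z) = 0.
Proof. exact: (klin0 (@cmul_klinr x y z a)). Qed.
Lemma cmulZl x y z r (a : A x y) (b : A y z) : cmul (r *: a) b = r *: cmul a b.
Proof. by rewrite -[r *: a]addr0 cmulDl cmul0l addr0. Qed.
Lemma cmulZr x y z r (a : A x y) (b : A y z) : cmul a (r *: b) = r *: cmul a b.
Proof. by rewrite -[r *: b]addr0 cmulDr cmul0r addr0. Qed.
Lemma cmul_suml x y z (b : A y z) I (l : seq I) (F : I -> A x y) :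
  cmul (\sum_(i <- l) F i) b = \sum_(i <- l) cmul (F i) b.
Proof. exact: (klin_sum l F (@cmul_klinl x y z b)). Qed.
Lemma cmul_sumr x y z (a : A x y) I (l : seq I) (F : I -> A y z) :
  cmul a (\sum_(i <- l) F i) = \sum_(i <- l) cmul a (F i).
Proof. exact: (klin_sum l F (@cmul_klinr x y z a)). Qed.
Lemma gc0 x y (s : G x y) : gc gA s 0 = 0.
Proof. exact: (klin0 (gc_klin s)). Qed.
Lemma gc_sumE x y (s : G x y) I (l : seq I) (F : I -> A x y) :
  gc gA s (\sum_(i <- l) F i) = \sum_(i <- l) gc gA s (F i).
Proof. exact: (klin_sum l F (gc_klin s)). Qed.

Lemma inDeg_gc x y (s : G x y) a : inDeg gA s (gc gA s a).
Proof. by rewrite /inDeg gc_gc eqxx. Qed.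
Lemma inDeg_mul x y z (s : G x y) (t : G y z) a b :
  inDeg gA s a -> inDeg gA t b -> inDeg gA (gcomp s t) (cmul a b).
Proof. exact: gc_mul. Qed.
Lemma gc_other x y (s t : G x y) a : inDeg gA s a -> gc gA t a = if t == s then a else 0.
Proof. by move=> h; rewrite -{1}h gc_gc h. Qed.
Lemma inDeg0 x y (s : G x y) : inDeg gA s 0.
Proof. exact: gc0. Qed.
Lemma inDegD x y (s : G x y) a b : inDeg gA s a -> inDeg gA s b -> inDeg gA s (a + b).
Proof. by move=> ha hb; rewrite /inDeg (klinD a b (gc_klin s)) ha hb. Qed.
Lemma inDegZ x y (s : G x y) r a : inDeg gA s a -> inDeg gA s (r *: a).
Proof. by move=> ha; rewrite /inDeg (klinZ r a (gc_klin s)) ha. Qed.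
Lemma inDeg_sum x y (s : G x y) I (l : seq I) (F : I -> A x y) :
  (forall i, inDeg gA s (F i)) -> inDeg gA s (\sum_(i <- l) F i).
Proof.
move=> h; elim: l => [|i l IH]; rewrite ?big_nil ?big_cons; first exact: inDeg0.
exact: inDegD.
Qed.
Lemma gc_decomp x y (a : A x y) : a = \sum_(s <- gsupp gA a) gc gA s a.
Proof. exact: gc_sum. Qed.

Lemma gc_mulr x y z (s : G x y) (u : G z x) (a : A z x) (q : A x y) :
  inDeg gA s q -> gc gA (gcomp u s) (cmul a q) = cmul (gc gA u a) q.
Proof.
move=> hq; rewrite {1}(gc_decomp a) cmul_suml gc_sumE.
under eq_bigr => v _ do rewrite (gc_other _ (inDeg_mul (inDeg_gc v a) hq)) gcancelr.
rewrite (eq_bigr (fun v => if v == u then cmul (gc gA v a) q else 0)); last first.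
  by move=> v _; rewrite eq_sym.
rewrite sum_pred1 ?gsupp_uniq //; case: ifP => // /negbT hu.
by rewrite gc_out // cmul0l.
Qed.
Lemma gc_mull x y z (s : G x y) (u : G z x) (p : A z x) (q : A x y) :
  inDeg gA u p -> gc gA (gcomp u s) (cmul p q) = cmul p (gc gA s q).
Proof.
move=> hp; rewrite {1}(gc_decomp q) cmul_sumr gc_sumE.
under eq_bigr => v _ do rewrite (gc_other _ (inDeg_mul hp (inDeg_gc v q))) gcancell.
rewrite (eq_bigr (fun v => if v == s then cmul p (gc gA v q) else 0)); last first.
  by move=> v _; rewrite eq_sym.
rewrite sum_pred1 ?gsupp_uniq //; case: ifP => // /negbT hu.
by rewrite gc_out // cmul0r.
Qed.

Lemma inB_one x : inB gA (cone A x).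
Proof. exact: gc_one. Qed.
End Graded.
Section Split.
Variables (k : comPzRingType) (X : Type) (G : groupoid X) (A : klcat k X) (gA : graded G A).

Definition split_prop x y (s : G x y) (l : seq (A y x * A x y)) :=
  (forall p, p \in l -> inDeg gA (ginv s) p.1 /\ inDeg gA s p.2) /\
  cone A y = \sum_(p <- l) cmul p.1 p.2.
Definition SPL := forall x y (s : G x y), exists l, split_prop s l.

Lemma span_in x y z (s : G x y) (t : G y z) (l : seq (A x y * A y z)) :
  (forall p, p \in l -> inDeg gA s p.1 /\ inDeg gA t p.2) ->
  inDeg gA (gcomp s t) (\sum_(p <- l) cmul p.1 p.2).
Proof.
elim: l => [|p l IH] h; rewrite ?big_nil ?big_cons; first exact: inDeg0.
have [h1 h2] := h p (mem_head _ _).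
apply: inDegD; first exact: inDeg_mul.
by apply: IH => q hq; apply: h; rewrite in_cons hq orbT.
Qed.

Lemma SG_SPL : strongly_graded gA -> SPL.
Proof.
move=> sg x y s.
have [h _] := sg _ _ _ (ginv s) s (cone A y).
have [l [hl e]] := h (etrans (f_equal (fun u => gc gA u _) (gcompVs s)) (inB_one gA y)).
by exists l.
Qed.

Lemma SPL_SG : SPL -> strongly_graded gA.
Proof.
move=> spl x y z s t c; split; last first.
  by case=> l [hl ->]; apply: span_in.
move=> hc; have [l [hl e]] := spl _ _ (ginv s).
exists [seq (p.1, cmul p.2 c) | p <- l]; split.
  move=> q /mapP [p hp ->] /=; have [h1 h2] := hl p hp; split.
    by move: h1; rewrite ginvK.
  by have := inDeg_mul h2 hc; rewrite gcompVl.
rewrite big_map /=.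
under eq_bigr => p _ do rewrite cmulA.
by rewrite -cmul_suml -e cmul1l.
Qed.

Lemma IP_SPL : inv_prod_cond gA -> SPL.
Proof.
move=> ip x y s; have [h _] := ip _ _ s (cone A y).
by have [l [hl e]] := h (inB_one gA y); exists l.
Qed.

Lemma SPL_IP : SPL -> inv_prod_cond gA.
Proof.
move=> spl x y s b; split; last first.
  by case=> l [hl ->]; have := span_in hl; rewrite gcompVs.
move=> hb; have [l [hl e]] := spl _ _ s.
exists [seq (p.1, cmul p.2 b) | p <- l]; split.
  move=> q /mapP [p hp ->] /=; have [h1 h2] := hl p hp; split => //.
  by have := inDeg_mul h2 hb; rewrite gcomps1.
rewrite big_map /=.
under eq_bigr => p _ do rewrite cmulA.
by rewrite -cmul_suml -e cmul1l.
Qed.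

Lemma unit_always : unit_bij gA.
Proof.
move=> x N Q g [gl [gr gb]]; split.
  exists (fun n => g n (cone A x)); split.
    by move=> r u v; apply: gl => //; apply: inB_one.
  move=> u v _ hv; rewrite gb //; last exact: inB_one.
  by rewrite cmul1r.
move=> h h' _ _ e e' w.
by rewrite -(nact1 w) e ?e' //; apply: inB_one.
Qed.
End Split.
Section Quot.
Local Open Scope quotient_scope.
Variables (k : comPzRingType) (V : lmodType k) (S : V -> Prop).
Hypotheses (S0 : S 0) (SD : forall u v, S u -> S v -> S (u + v))
  (SZ : forall r v, S v -> S (r *: v)).

Lemma SN v : S v -> S (- v).
Proof. by move=> h; rewrite -scaleN1r; apply: SZ. Qed.
Lemma SB u v : S u -> S v -> S (u - v).
Proof. by move=> hu hv; apply: SD => //; apply: SN. Qed.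

Definition qrel (u v : V) : bool := `[< S (u - v) >].
Lemma qrel_refl : reflexive qrel.
Proof. by move=> u; apply/asboolP; rewrite subrr. Qed.
Lemma qrel_sym : symmetric qrel.
Proof.
move=> u v; apply/asboolP/asboolP => /SN; by rewrite opprB.
Qed.
Lemma qrel_trans : transitive qrel.
Proof.
move=> v u w /asboolP h1 /asboolP h2; apply/asboolP.
have := SD h1 h2; by rewrite addrA subrK.
Qed.
Definition qequiv := EquivRel qrel qrel_refl qrel_sym qrel_trans.
Definition QT := {eq_quot qequiv}.
HB.instance Definition _ := Choice.copy QT {eq_quot qequiv}.
HB.instance Definition _ := Quotient.copy QT {eq_quot qequiv}.

Definition qpi (v : V) : QT := \pi_QT v.
Lemma qpiP u v : qpi u = qpi v <-> S (u - v).
Proof.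
split; first by move/eqquotP => /asboolP.
by move=> h; apply/eqquotP; apply/asboolP.
Qed.
Lemma qreprP (q : QT) : q = qpi (repr q).
Proof. by rewrite /qpi reprK. Qed.

Definition qzero : QT := qpi 0.
Definition qadd (a b : QT) : QT := qpi (repr a + repr b).
Definition qopp (a : QT) : QT := qpi (- repr a).
Definition qscale (r : k) (a : QT) : QT := qpi (r *: repr a).

Lemma qaddE u v : qadd (qpi u) (qpi v) = qpi (u + v).
Proof.
apply/qpiP; have /qpiP h1 := qreprP (qpi u); have /qpiP h2 := qreprP (qpi v).
have := SD (SN h1) (SN h2); rewrite !opprB.
by congr S; rewrite opprD addrACA.
Qed.
Lemma qoppE u : qopp (qpi u) = qpi (- u).
Proof.
apply/qpiP; have /qpiP h1 := qreprP (qpi u).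
rewrite opprK addrC; have := SN h1; by rewrite opprB.
Qed.
Lemma qscaleE r u : qscale r (qpi u) = qpi (r *: u).
Proof.
apply/qpiP; have /qpiP h1 := qreprP (qpi u).
have := SZ r (SN h1); rewrite opprB scalerBr.
done.
Qed.

Lemma qelim (P : QT -> Prop) : (forall v, P (qpi v)) -> forall q, P q.
Proof. by move=> h q; rewrite (qreprP q). Qed.

Fact qaddA : associative qadd.
Proof.
by elim/qelim=> a; elim/qelim=> b; elim/qelim=> c; rewrite !qaddE addrA.
Qed.
Fact qaddC : commutative qadd.
Proof. by elim/qelim=> a; elim/qelim=> b; rewrite !qaddE addrC. Qed.
Fact qadd0 : left_id qzero qadd.
Proof. by elim/qelim=> a; rewrite /qzero qaddE add0r. Qed.
Fact qaddN : left_inverse qzero qopp qadd.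
Proof. by elim/qelim=> a; rewrite qoppE qaddE addNr. Qed.
HB.instance Definition _ := GRing.isZmodule.Build QT qaddA qaddC qadd0 qaddN.
Lemma qaddE2 u v : qpi u + qpi v = qpi (u + v). Proof. exact: qaddE. Qed.

Fact qscaleA a b v : qscale a (qscale b v) = qscale (a * b) v.
Proof. by elim/qelim: v => v; rewrite !qscaleE scalerA. Qed.
Fact qscale1 : left_id 1 qscale.
Proof. by elim/qelim=> v; rewrite qscaleE scale1r. Qed.
Fact qscaleDr : right_distributive qscale +%R.
Proof.
move=> r; elim/qelim=> a; elim/qelim=> b.
by rewrite qaddE2 !qscaleE qaddE2 scalerDr.
Qed.
Fact qscaleDl v : {morph qscale^~ v: a b / a + b}.
Proof.
elim/qelim: v => v a b.
by rewrite !qscaleE qaddE2 scalerDl.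
Qed.
HB.instance Definition _ := GRing.Zmodule_isLmodule.Build k QT qscaleA qscale1 qscaleDr qscaleDl.

Lemma qpi_lin r u v : qpi (r *: u + v) = r *: qpi u + qpi v.
Proof. by rewrite -qaddE2 -[r *: qpi u]/(qscale r (qpi u)) qscaleE. Qed.
Lemma qpi0 v : qpi v = 0 <-> S v.
Proof.
have -> : (0 : QT) = qpi 0 by [].
by rewrite qpiP subr0.
Qed.
End Quot.
Section Mod.
Variables (k : comPzRingType) (X : Type) (G : groupoid X) (A : klcat k X) (gA : graded G A)
  (M : grmod gA).

Lemma mact_klinl x y z (a : A y z) : is_klin (fun m : M x y => mact m a).
Proof. by move=> r u v; rewrite mactDl. Qed.
Lemma mact_klinr x y z (m : M x y) : is_klin (fun a : A y z => mact m a).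
Proof. by move=> r u v; rewrite mactDr. Qed.
Lemma mc_klin x y (s : G x y) : is_klin (mc s : M x y -> M x y).
Proof. by move=> r u v; rewrite mc_lin. Qed.

Lemma mact_comp x y (m : M x x) (a : A x y) (s : G x y) :
  mc (gid G x) m = m -> mc s (mact m a) = mact m (gc gA s a).
Proof.
move=> hm; rewrite {1}(gc_decomp gA a) (klin_sum _ _ (@mact_klinr x x y m)).
rewrite (klin_sum _ _ (mc_klin s)).
rewrite (eq_bigr (fun t => if t == s then mact m (gc gA t a) else 0)); last first.
  move=> t _; have ht := mc_act hm (inDeg_gc gA t a); rewrite gcomp1s in ht.
  by rewrite -{1}ht mc_mc ht eq_sym.
rewrite sum_pred1 ?gsupp_uniq //; case: ifP => // /negbT hs.
by rewrite gc_out // (klin0 (@mact_klinr x x y m)).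
Qed.

Lemma mact0l x y z (a : A y z) : mact (0 : M x y) a = 0.
Proof. by have := klin0 (@mact_klinl x y z a). Qed.
Lemma mact0r x y z (m : M x y) : mact m (0 : A y z) = 0.
Proof. by have := klin0 (@mact_klinr x y z m). Qed.
Lemma mc0 x y (s : G x y) : mc s (0 : M x y) = 0.
Proof. exact: klin0 (mc_klin s). Qed.
End Mod.
Lemma quot_sep (k : comPzRingType) (V : lmodType k) (S : V -> Prop)
  (S0 : S 0) (SD : forall u v, S u -> S v -> S (u + v)) (SZ : forall r v, S v -> S (r *: v)) :
  (forall (Q : lmodType k) (phi : V -> Q), is_klin phi -> (forall v, S v -> phi v = 0) ->
     forall v, phi v = 0) -> forall v, S v.
Proof.
move=> h v; apply/(qpi0 S0 SD SZ); apply: h; first exact: qpi_lin.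
by move=> u /(qpi0 S0 SD SZ).
Qed.

Section Gal.
Variables (k : comPzRingType) (X : Type) (G : groupoid X) (A : klcat k X) (gA : graded G A).

Lemma choose_spl : SPL gA -> {sp : forall x y (s : G x y), seq (A y x * A x y) |
   forall x y s, split_prop gA s (sp x y s)}.
Proof.
move=> spl; exists (fun x y s => proj1_sig (cid (spl x y s))) => x y s.
exact: proj2_sig (cid (spl x y s)).
Qed.

Lemma hom_pick x y z (Q : lmodType k) (hh : G x y -> A z y -> Q) (s : G x y) (w : A z x) (q : A x y) :
  (forall t, is_klin (hh t)) -> inDeg gA s q ->
  \sum_(t <- gsupp gA q) hh t (cmul w (gc gA t q)) = hh s (cmul w q).
Proof.
move=> hl hq.
rewrite (eq_bigr (fun t => if t == s then hh t (cmul w q) else 0)); last first.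
  move=> t _; rewrite (gc_other _ hq); case: eqP => // _.
  by rewrite cmul0r (klin0 (hl t)).
rewrite sum_pred1 ?gsupp_uniq //; case: ifP => // /negbT hs.
have -> : q = 0 by rewrite -hq gc_out.
by rewrite cmul0r (klin0 (hl s)).
Qed.

Lemma SPL_GAL : SPL gA -> galois gA.
Proof.
move=> /choose_spl [sp hsp] x y z Q g [gl [gr gb]].
have gR : forall u, is_klin (g u) by move=> u r v v'; apply: gr.
split.
  exists (fun s w => \sum_(p <- sp x y s) g (cmul w p.1) p.2); split.
    move=> s r u v.
    under eq_bigr => p _ do rewrite cmulDl gl //.
    by rewrite big_split /= scaler_sumr.
  move=> a a'; rewrite {1}(gc_decomp gA a') (klin_sum _ _ (gR a)).
  apply: eq_bigr => s _.
  have [hl e] := hsp x y s.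
  rewrite -{1}[gc gA s a']cmul1r e cmul_sumr (klin_sum _ _ (gR a)).
  apply: eq_big_seq => p hp; have [h1 h2] := hl p hp.
  rewrite -cmulA gb ?cmulA //.
  rewrite /inB -(gcompsV s); exact: inDeg_mul (inDeg_gc gA s a') h1.
suff key : forall hh : G x y -> A z y -> Q, (forall s, is_klin (hh s)) ->
    (forall a a', g a a' = \sum_(s <- gsupp gA a') hh s (cmul a (gc gA s a'))) ->
    forall s w, hh s w = \sum_(p <- sp x y s) g (cmul w p.1) p.2.
  by move=> h h' hl hl' e e' s w; rewrite (key h) // (key h').
move=> hh hl e s w; have [hs es] := hsp x y s.
under eq_big_seq => p hp.
  rewrite e (hom_pick _ hl (proj2 (hs p hp))).
over.
rewrite -(klin_sum _ _ (hl s)).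
under eq_bigr => p _ do rewrite -cmulA.
by rewrite -cmul_sumr -es cmul1r.
Qed.

Lemma GAL_SPL : galois gA -> SPL gA.
Proof.
move=> gal x y s.
pose S := fun w : A y y => exists l : seq (A y x * A x y),
   (forall p, p \in l -> inDeg gA s p.2) /\ w = \sum_(p <- l) cmul p.1 p.2.
have S0 : S 0 by exists [::]; rewrite big_nil.
have SD : forall u v, S u -> S v -> S (u + v).
  move=> u v [l1 [h1 ->]] [l2 [h2 ->]]; exists (l1 ++ l2); split; last by rewrite big_cat.
  by move=> p; rewrite mem_cat => /orP [] ?; [apply: h1 | apply: h2].
have SZ : forall r v, S v -> S (r *: v).
  move=> r v [l [h ->]]; exists [seq (r *: p.1, p.2) | p <- l]; split.
    by move=> q; case/mapP => p hp -> /=; apply: h.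
  rewrite scaler_sumr big_map; apply: eq_bigr => p _ /=.
  by rewrite cmulZl.
have S1 : S (cone A y).
  apply: (quot_sep S0 SD SZ) => Q phi phil phiS v.
  have := gal x y y Q (fun _ _ => 0); case.
    split; first by move=> *; rewrite scaler0 addr0.
    by split => *; rewrite ?scaler0 ?addr0.
  move=> _ un.
  have e := un (fun _ _ => 0) (fun t w => if t == s then phi w else 0).
  suff : (0 : Q) = (if s == s then phi v else 0) by rewrite eqxx => <-.
  apply: e.
  - by move=> t r u u'; rewrite scaler0 addr0.
  - by move=> t r u u'; case: eqP => _; [apply: phil | rewrite scaler0 addr0].
  - by move=> a a'; rewrite big1.
  - move=> a a'; rewrite big1 // => t _; case: eqP => // ->.
    apply: phiS; exists [:: (a, gc gA s a')]; split; last by rewrite big_seq1.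
    by move=> p; rewrite inE => /eqP -> /=; apply: inDeg_gc.
case: S1 => l [hl e].
exists [seq (gc gA (ginv s) p.1, p.2) | p <- l]; split.
  by move=> q /mapP [p hp ->] /=; split; [apply: inDeg_gc | apply: hl].
rewrite big_map /= -(inB_one gA y) /inB -(gcompVs s) e gc_sumE.
by apply: eq_big_seq => p hp; rewrite gc_mulr //; apply: hl.
Qed.
End Gal.
Section CB.
Variables (k : comPzRingType) (X : Type) (G : groupoid X) (A : klcat k X) (gA : graded G A).

Lemma SPL_CB : SPL gA -> counit_bij gA.
Proof.
move=> /choose_spl [sp hsp] M x y Q g [gl [gr gb]].
have gR : forall u, mc (gid G x) u = u -> is_klin (g u).
  by move=> u hu r v v'; apply: gr.
have PU0 : mc (gid G x) (0 : M x x) = 0 by apply: mc0.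
have gL : forall v, plin (fun u : M x x => mc (gid G x) u = u) (fun u => g u v).
  by move=> v r u u' hu hu'; apply: gl.
have PUa : forall (s : G x y) (m : M x y) p, p \in sp x y s ->
    mc (gid G x) (mact (mc s m) p.1) = mact (mc s m) p.1.
  move=> s m p hp; have [h1 _] := (hsp x y s).1 p hp.
  have hm : mc s (mc s m) = mc s m by rewrite mc_mc eqxx.
  by have := mc_act hm h1; rewrite gcompsV.
pose hs (s : G x y) (m : M x y) := \sum_(p <- sp x y s) g (mact (mc s m) p.1) p.2.
have hs_lin : forall s, is_klin (hs s).
  move=> s r u v; rewrite /hs.
  rewrite (eq_big_seq (fun p => r *: g (mact (mc s u) p.1) p.2 + g (mact (mc s v) p.1) p.2)).
    by rewrite big_split /= scaler_sumr.
  move=> p hp /=; rewrite mc_lin mactDl gl //; [exact: PUa | exact: PUa].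
have hs0 : forall s (m : M x y), mc s m = 0 -> hs s m = 0.
  move=> s m e; rewrite /hs big1 // => p _; rewrite e.
  rewrite (klin0 (@mact_klinl _ _ _ _ _ M x y x p.1)).
  exact: (plin0 (gL p.2) PU0).
pose h (m : M x y) := \sum_(s <- msupp m) hs s m.
have hL : forall (L : seq (G x y)) m, uniq L -> {subset msupp m <= L} -> h m = \sum_(s <- L) hs s m.
  move=> L m uL sub; apply: sum_supp => //; first exact: msupp_uniq.
  by move=> s hsm; apply: hs0; apply: mc_out.
split.
  exists h; split.
    move=> r u v.
    set L := undup (msupp (r *: u + v) ++ msupp u ++ msupp v).
    have uL : uniq L by apply: undup_uniq.
    rewrite (hL L) // ?(hL L _ uL) //; first last.
    - by move=> s hs'; rewrite mem_undup !mem_cat hs' ?orbT.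
    - by move=> s hs'; rewrite mem_undup !mem_cat hs' ?orbT.
    - by move=> s hs'; rewrite mem_undup !mem_cat hs' ?orbT.
    rewrite scaler_sumr -big_split; apply: eq_bigr => s _ /=.
    exact: hs_lin.
  move=> m a hm _.
  set L := undup (msupp (mact m a) ++ gsupp gA a).
  have uL : uniq L by apply: undup_uniq.
  rewrite (hL L) //; last by move=> s hs'; rewrite mem_undup !mem_cat hs' ?orbT.
  rewrite {2}(gc_decomp gA a) (sum_supp (gsupp_uniq gA a) uL); first last.
  - by move=> s hs'; rewrite gc_out.
  - by move=> s hs'; rewrite mem_undup !mem_cat hs' ?orbT.
  rewrite (klin_sum _ _ (gR m hm)); apply: eq_bigr => s _.
  rewrite /hs (mact_comp _ _ hm).
  have [hl e] := hsp x y s.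
  rewrite -{2}[gc gA s a]cmul1r e cmul_sumr (klin_sum _ _ (gR m hm)).
  apply: eq_big_seq => p hp; have [h1 h2] := hl p hp.
  rewrite mactA gb //; first by rewrite cmulA.
  by rewrite /inB -(gcompsV s); exact: inDeg_mul (inDeg_gc gA s a) h1.
suff key : forall hh : M x y -> Q, is_klin hh ->
    (forall u v, mc (gid G x) u = u -> True -> hh (mact u v) = g u v) -> forall w, hh w = h w.
  by move=> h1 h2 l1 l2 e1 e2 w; rewrite (key h1) // (key h2).
move=> hh hl e w; rewrite {1}(mc_sum w) (klin_sum _ _ hl); apply: eq_bigr => s _.
have [hs' es] := hsp x y s.
rewrite /hs -{1}[mc s w]mact1 es (klin_sum _ _ (@mact_klinr _ _ _ _ _ M x y y (mc s w))).
rewrite (klin_sum _ _ hl); apply: eq_big_seq => p hp.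
by rewrite -mactA e //; apply: PUa.
Qed.
End CB.
Section CBsurj.
Variables (k : comPzRingType) (X : Type) (G : groupoid X) (A : klcat k X) (gA : graded G A).

Lemma CB_surj : counit_bij gA -> forall (M : grmod gA) x y (v : M x y),
  exists l : seq (M x x * A x y), (forall p, p \in l -> mc (gid G x) p.1 = p.1) /\
     v = \sum_(p <- l) mact p.1 p.2.
Proof.
move=> cb M x y.
pose S := fun v : M x y => exists l : seq (M x x * A x y),
   (forall p, p \in l -> mc (gid G x) p.1 = p.1) /\ v = \sum_(p <- l) mact p.1 p.2.
have S0 : S 0 by exists [::]; rewrite big_nil.
have SD : forall u v, S u -> S v -> S (u + v).
  move=> u v [l1 [h1 ->]] [l2 [h2 ->]]; exists (l1 ++ l2); split; last by rewrite big_cat.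
  by move=> p; rewrite mem_cat => /orP [] ?; [apply: h1 | apply: h2].
have SZ : forall r v, S v -> S (r *: v).
  move=> r v [l [h ->]]; exists [seq (r *: p.1, p.2) | p <- l]; split.
    move=> q; case/mapP => p hp -> /=.
    by rewrite -[r *: p.1]addr0 mc_lin mc0 !addr0 h.
  rewrite scaler_sumr big_map; apply: eq_bigr => p _ /=.
  by rewrite -[r *: p.1]addr0 mactDl mact0l !addr0.
apply: (quot_sep S0 SD SZ) => Q phi phil phiS v.
have := cb M x y Q (fun _ _ => 0); case.
  split; first by move=> *; rewrite scaler0 addr0.
  by split => *; rewrite ?scaler0 ?addr0.
move=> _ un.
apply: (un phi (fun _ => 0)) => //.
- by move=> r u u'; rewrite scaler0 addr0.
- move=> u a hu _; apply: phiS; exists [:: (u, a)]; split; last by rewrite big_seq1.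
  by move=> p; rewrite inE => /eqP -> /=.
Qed.
End CBsurj.
Lemma sum_ord_le1 (V : nmodType) n (F : 'I_n -> V) (i : 'I_n) : (n <= 1)%N -> \sum_j F j = F i.
Proof.
case: n F i => [|[|n]] F i hn //; first by case: i.
by rewrite big_ord1 (fintype.ord1 i).
Qed.

Section Shift.
Variables (k : comPzRingType) (X : Type) (G : groupoid X) (A : klcat k X) (gA : graded G A).
Variables (w : X) (ro : forall x : X, option (G w x)).

Definition nb (x : X) : nat := isSome (ro x).
Definition Mh (x y : X) : lmodType k := {ffun 'I_(nb x) -> A w y}.
Definition Mact x y z (m : Mh x y) (a : A y z) : Mh x z := [ffun i => cmul (m i) a].
Definition Mc x y (t : G x y) (m : Mh x y) : Mh x y :=
  [ffun i => match ro x with Some r => gc gA (gcomp r t) (m i) | None => 0 end].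
Definition Mval x y (m : Mh x y) : A w y := \sum_j m j.
Definition Msupp x y (m : Mh x y) : seq (G x y) :=
  match ro x with Some r => [seq gcomp (ginv r) s | s <- gsupp gA (Mval m)] | None => [::] end.

Lemma Mval_i x y (m : Mh x y) (i : 'I_(nb x)) : Mval m = m i.
Proof. by apply: sum_ord_le1; rewrite /nb leq_b1. Qed.

Lemma nb_none x (i : 'I_(nb x)) : ro x = None -> False.
Proof.
move=> e; have h0 : nb x = 0%N by rewrite /nb e.
by move: i; rewrite h0 => -[].
Qed.

Fact Mact1 x y (m : Mh x y) : Mact m (cone A y) = m.
Proof. by apply/ffunP => i; rewrite ffunE cmul1r. Qed.
Fact MactA x y z t (m : Mh x y) (a : A y z) (b : A z t) : Mact (Mact m a) b = Mact m (cmul a b).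
Proof. by apply/ffunP => i; rewrite !ffunE cmulA. Qed.
Fact MactDl x y z r (m m' : Mh x y) (a : A y z) : Mact (r *: m + m') a = r *: Mact m a + Mact m' a.
Proof. by apply/ffunP => i; rewrite !ffunE cmulDl. Qed.
Fact MactDr x y z r (m : Mh x y) (a a' : A y z) : Mact m (r *: a + a') = r *: Mact m a + Mact m a'.
Proof. by apply/ffunP => i; rewrite !ffunE cmulDr. Qed.
Fact Mc_lin x y (s : G x y) r (m m' : Mh x y) : Mc s (r *: m + m') = r *: Mc s m + Mc s m'.
Proof.
apply/ffunP => i; rewrite !ffunE; case: (ro x) => [a|]; first by rewrite gc_lin.
by rewrite scaler0 addr0.
Qed.
Fact Mc_sum x y (m : Mh x y) : m = \sum_(s <- Msupp m) Mc s m.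
Proof.
apply/ffunP => i; rewrite sum_ffunE /Msupp.
case E: (ro x) => [r|]; last by case: (nb_none i E).
rewrite big_map (Mval_i m i) {1}(gc_decomp gA (m i)).
by apply: eq_bigr => s _; rewrite ffunE E gcompVr.
Qed.
Fact Mc_out x y (m : Mh x y) (s : G x y) : s \notin Msupp m -> Mc s m = 0.
Proof.
rewrite /Msupp => hs; apply/ffunP => i; rewrite !ffunE.
case E: (ro x) => [r|] //; rewrite E in hs.
rewrite -(Mval_i m i) gc_out //; apply: contra hs => h.
by apply/mapP; exists (gcomp r s) => //; rewrite gcompVl.
Qed.
Fact Msupp_uniq x y (m : Mh x y) : uniq (Msupp m).
Proof.
rewrite /Msupp; case: (ro x) => [r|] //.
rewrite map_inj_uniq ?gsupp_uniq // => s t /eqP.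
by rewrite gcancell => /eqP.
Qed.
Fact Mc_mc x y (s t : G x y) (m : Mh x y) : Mc s (Mc t m) = if s == t then Mc t m else 0.
Proof.
apply/ffunP => i; rewrite !ffunE.
case E: (ro x) => [r|]; last by case: (nb_none i E).
rewrite gc_gc gcancell; case: (s == t) => //; rewrite ?ffunE ?E //.
Qed.
Fact Mc_act x y z (s : G x y) (t : G y z) (m : Mh x y) (a : A y z) :
  Mc s m = m -> gc gA t a = a -> Mc (gcomp s t) (Mact m a) = Mact m a.
Proof.
move=> hm ha; apply/ffunP => i; rewrite !ffunE.
case E: (ro x) => [r|]; last by case: (nb_none i E).
have hi : gc gA (gcomp r s) (m i) = m i.
  by move/ffunP: hm => /(_ i); rewrite ffunE E.
by rewrite gcompA; apply: gc_mul.
Qed.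

Definition shiftM : grmod gA :=
  @GrMod k X G A gA Mh Mact Mact1 MactA MactDl MactDr Mc Msupp Mc_lin Mc_sum Mc_out
    Msupp_uniq Mc_mc Mc_act.
End Shift.
Section Final.
Variables (k : comPzRingType) (X : Type) (G : groupoid X) (A : klcat k X) (gA : graded G A).

Lemma CB_SPL : counit_bij gA -> SPL gA.
Proof.
move=> cb x y s.
pose ro (x' : X) : option (G y x') := match pselect (x' = x) with
  | left e => Some (eq_rect_r (fun x' => G y x') (ginv s) e) | right _ => None end.
have roE : ro x = Some (ginv s).
  rewrite /ro; case: pselect => [e|n]; last by case: n.
  by rewrite (Prop_irrelevance e erefl).
pose M := shiftM gA ro.
have [l [hl e]] := CB_surj cb (M:=M) (x:=x) (y:=y) ([ffun _ => cone A y] : M x y).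
have i0 : 'I_(nb ro x) by apply: (@Ordinal _ 0); rewrite /nb roE.
have e' : ([ffun _ => cone A y] : {ffun 'I_(nb ro x) -> A y y}) = \sum_(p <- l) Mact p.1 p.2 := e.
move/ffunP: e' => /(_ i0); rewrite ffunE sum_ffunE => e1.
have hl' : forall p, p \in l -> inDeg gA (ginv s) (p.1 i0).
  move=> p hp; have := hl p hp; move/ffunP => /(_ i0).
  by rewrite ffunE roE gcomps1.
exists [seq (p.1 i0, gc gA s p.2) | p : M x x * A x y <- l]; split.
  by move=> q /mapP [p hp ->] /=; split; [apply: hl' | apply: inDeg_gc].
rewrite big_map /= -(inB_one gA y) /inB -(gcompVs s) e1 gc_sumE.
by apply: eq_big_seq => p hp; rewrite ffunE gc_mull //; apply: hl'.
Qed.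
End Final.

Theorem theorem8p2 (k : comPzRingType) (X : Type) (G : groupoid X)
  (A : klcat k X) (gA : graded G A) :
  (strongly_graded gA <-> inv_prod_cond gA) /\
  (strongly_graded gA <-> (unit_bij gA /\ counit_bij gA)) /\
  (strongly_graded gA <-> galois gA).
Proof.
split; last split.
- split => h; first exact: SPL_IP (SG_SPL h).
  exact: SPL_SG (IP_SPL h).
- split => h; first by split; [apply: unit_always | apply: SPL_CB (SG_SPL h)].
  exact: SPL_SG (CB_SPL h.2).
- split => h; first exact: SPL_GAL (SG_SPL h).
  exact: SPL_SG (GAL_SPL h).
Qed.
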